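(* For all $r,s\ge1$, as an identity of polynomials in $q$, $$\sum_C(q-1)^{|S(C)|-l(C)}(-1)^{|S(C)|}=q^{\min(r,s)},$$ where the sum runs over all cells $C$ for $(r,s)$, including the empty cell.
   Context: A cell (for given $r,s$) is a finite (possibly empty) sequence of distinct pairs $(i_1,j_1),\dots,(i_l,j_l)$ with $1\le i_k\le r$, $1\le j_k\le s$, $i_1\le\cdots\le i_l$ and $j_1\le\cdots\le j_l$; $l(C)=l$ and $|S(C)|=|\{i_1,\dots,i_l\}|+|\{j_1,\dots,j_l\}|$ (so the empty cell has $l=|S|=0$). *)

(* Defs.v *)
From HB Require Import structures.
From mathcomp Require Import all_boot all_order all_algebra.
Set Implicit Arguments. Unset Strict Implicit. Unset Printing Implicit Defensive.
Import Order.TTheory GRing.Theory Num.Theory.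

(* A cell for (r,s): a finite sequence of distinct pairs (i_k, j_k), with
   i_k ranging over 'I_r (i.e. {0..r-1}, shifted from {1..r}) and j_k over 'I_s,
   such that i_1 <= ... <= i_l and j_1 <= ... <= j_l. *)
Definition is_cell (r s : nat) (C : seq ('I_r * 'I_s)) : bool :=
  [&& uniq C,
      sorted leq [seq nat_of_ord p.1 | p <- C] &
      sorted leq [seq nat_of_ord p.2 | p <- C]].

Definition cell_l (r s : nat) (C : seq ('I_r * 'I_s)) : nat := size C.

Definition cell_S (r s : nat) (C : seq ('I_r * 'I_s)) : nat :=
  size (undup [seq p.1 | p <- C]) + size (undup [seq p.2 | p <- C]).

(* A cell consists of distinct pairs from a set of
   size r*s, so its length is at most r*s; we enumerate all sequences of each
   length l <= r*s and keep those that are cells. *)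
Definition sum_cells (R : nmodType) (r s : nat) (F : seq ('I_r * 'I_s) -> R) : R :=
  (\sum_(l < (r * s).+1) \sum_(t : l.-tuple ('I_r * 'I_s) | is_cell (tval t)) F (tval t))%R.

(* Main.v *)
Require Import Defs.
From HB Require Import structures.
From mathcomp Require Import all_boot all_order all_algebra.
From mathcomp Require Import zify ring.
Set Implicit Arguments. Unset Strict Implicit. Unset Printing Implicit Defensive.
Import GRing.Theory.
Local Open Scope ring_scope.

Lemma big_tuple_cons (R : nmodType) (T : finType) n (P : seq T -> bool) (F : seq T -> R) :
  \sum_(t : n.+1.-tuple T | P t) F t =
  \sum_(x : T) \sum_(t : n.-tuple T | P (x :: t)) F (x :: t).
Proof.
rewrite pair_big_dep /=.
rewrite (reindex (fun p : T * n.-tuple T => cons_tuple p.1 p.2)) //=.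
exists (fun t : n.+1.-tuple T => (thead t, [tuple of behead t])).
  by move=> [x t] _ /=; congr pair; apply: val_inj.
by move=> t _; rewrite [in RHS](tuple_eta t).
Qed.

Section Cells.
Variables r s : nat.
Local Notation T := ('I_r * 'I_s)%type.

Definition prec (x y : T) : bool := [&& (x.1 <= y.1)%N, (x.2 <= y.2)%N & x != y].

Lemma pair_eqN (x y : T) : (x == y) = ((x.1 : nat) == y.1) && ((x.2 : nat) == y.2).
Proof. by case: x y => [x1 x2] [y1 y2]; rewrite xpair_eqE. Qed.

Lemma prec_sum (x y : T) : prec x y -> (x.1 + x.2 < y.1 + y.2)%N.
Proof. by case/and3P=> h1 h2; rewrite pair_eqN; lia. Qed.

Lemma is_cell_cons (x : T) t :
  is_cell (x :: t) = is_cell t && (if t is y :: _ then prec x y else true).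
Proof.
case: t => [|y t] //=; rewrite /is_cell /=.
rewrite /prec inE negb_or.
apply/idP/idP.
  move=> /and4P[/and3P[/andP[Hxy Hxt] Hyt Hu] /andP[H1 S1] H2 S2].
  by rewrite Hyt Hu S1 S2 H1 H2 Hxy.
move=> /andP[/and3P[/andP[Hyt Hu] S1 S2] /and3P[H1 H2 Hxy]].
rewrite Hxy Hyt Hu H1 S1 H2 S2 /= !andbT.
apply/negP=> Hx.
have A1 := order_path_min leq_trans S1.
have A2 := order_path_min leq_trans S2.
have /allP/(_ _ (map_f (fun p : T => nat_of_ord p.1) Hx)) B1 := A1.
have /allP/(_ _ (map_f (fun p : T => nat_of_ord p.2) Hx)) B2 := A2.
move/negP: Hxy; apply;  rewrite pair_eqN; apply/andP; split; apply/eqP; lia.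
Qed.


Definition w (C : seq T) : {poly int} :=
  ('X - 1 : {poly int}) ^+ (cell_S C - cell_l C)%N * (-1) ^+ cell_S C.

Definition stp (x y : T) : {poly int} :=
  if (x.1 < y.1)%N && (x.2 < y.2)%N then 'X - 1 else -1.

Lemma cell_facts (x y : T) t : is_cell (x :: y :: t) ->
  [/\ is_cell (y :: t), prec x y, all (leq y.1) [seq (nat_of_ord p.1) | p <- t]
    & all (leq y.2) [seq (nat_of_ord p.2) | p <- t]].
Proof.
rewrite is_cell_cons => /andP[Hc Hp]; split => //.
  by case/and3P: Hc => _ /(order_path_min leq_trans).
by case/and3P: Hc => _ _ /(order_path_min leq_trans).
Qed.

Lemma cellS_cons (x y : T) t : is_cell (x :: y :: t) ->
  cell_S (x :: y :: t) =
  (cell_S (y :: t) + ((x.1 : nat) != y.1) + ((x.2 : nat) != y.2))%N.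
Proof.
move=> /cell_facts [_ /and3P[H1 H2 _] A1 A2].
have M1 : (x.1 \in [seq p.1 | p <- y :: t]) = ((x.1 : nat) == y.1).
  rewrite /= inE -val_eqE /=; case: eqP => //= Hne.
  apply/negP => /mapP [z zt ex].
  have /allP/(_ _ (map_f (fun p : T => nat_of_ord p.1) zt)) := A1.
  rewrite -ex /=; lia.
have M2 : (x.2 \in [seq p.2 | p <- y :: t]) = ((x.2 : nat) == y.2).
  rewrite /= inE -val_eqE /=; case: eqP => //= Hne.
  apply/negP => /mapP [z zt ex].
  have /allP/(_ _ (map_f (fun p : T => nat_of_ord p.2) zt)) := A2.
  rewrite -ex /=; lia.
rewrite /cell_S [map _ (x :: _)]/= [map (fun p : T => p.2) (x :: _)]/=.
rewrite [undup (x.1 :: _)]/= [undup (x.2 :: _)]/= M1 M2.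
by case: eqP; case: eqP => /= _ _; lia.
Qed.

Lemma cellS_ge (C : seq T) : is_cell C -> (cell_l C <= cell_S C)%N.
Proof.
elim: C => [|x [|y t] IH] //= Hc.
have Hc' : is_cell (y :: t) by case/cell_facts: Hc.
have := IH Hc'; rewrite (cellS_cons Hc).
case/cell_facts: Hc => _ /and3P[_ _]; rewrite pair_eqN /cell_l /=; lia.
Qed.

Lemma w1 (x : T) : w [:: x] = 'X - 1.
Proof. rewrite /w /cell_S /cell_l /=. have -> : (1 + 1 - 1 = 1)%N by []. have -> : (1 + 1 = 2)%N by []. rewrite expr1 expr2; ring. Qed.

Lemma w_cons (x y : T) t : is_cell (x :: y :: t) -> w (x :: y :: t) = stp x y * w (y :: t).
Proof.
move=> Hc; have Hc' : is_cell (y :: t) by case/cell_facts: Hc.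
have Hge := cellS_ge Hc'.
rewrite /w (cellS_cons Hc) /stp.
move: Hge; rewrite /cell_l /=.
set S := cell_S (y :: t : seq T); set l := size t.
case/cell_facts: Hc => _ /and3P[H1 H2 Hne] _ _; move: Hne; rewrite pair_eqN => Hne Hge.
case: eqP => E1; case: eqP => E2 /=.
- by move: Hne; rewrite E1 E2 !eqxx.
- have -> : (x.1 < y.1)%N = false by lia.
  have -> : (S + 0 + 1 - l.+2 = S - l.+1)%N by lia.
  rewrite addn0 addn1 exprS /=; ring.
- have -> : (x.1 < y.1)%N = true by lia.
  have -> : (x.2 < y.2)%N = false by lia.
  have -> : (S + 1 + 0 - l.+2 = S - l.+1)%N by lia.
  rewrite addn0 addn1 exprS /=; ring.
- have -> : (x.1 < y.1)%N = true by lia.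
  have -> : (x.2 < y.2)%N = true by lia.
  have -> : (S + 1 + 1 - l.+2 = (S - l.+1).+1)%N by lia.
  rewrite addn1 addn1 !exprS /=; ring.
Qed.

Definition A (l : nat) (x : T) : {poly int} :=
  \sum_(t : l.-tuple T | is_cell (x :: t)) w (x :: t).

Lemma A0 (x : T) : A 0 x = 'X - 1.
Proof.
rewrite /A (big_pred1 [tuple]) ?w1 // => t.
by rewrite (tuple0 t) /= eqxx /is_cell /=.
Qed.

Lemma AS l (x : T) : A l.+1 x = \sum_(y | prec x y) stp x y * A l y.
Proof.
rewrite /A (big_tuple_cons l (fun t => is_cell (x :: t)) (fun t => w (x :: t))) [RHS]big_mkcond; apply: eq_bigr => y _.
case: ifP => Hp.
  rewrite mulr_sumr; apply: eq_big => t; first by rewrite is_cell_cons /= Hp andbT.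
  by move=> Hc; rewrite w_cons.
by apply: big_pred0 => t; rewrite is_cell_cons /= Hp andbF.
Qed.

Lemma A_zero l (x : T) : (r + s < x.1 + x.2 + l + 2)%N -> A l x = 0.
Proof.
elim: l x => [|l IH] x H.
  by exfalso; have := ltn_ord x.1; have := ltn_ord x.2; lia.
rewrite AS big1 // => y Hp; rewrite IH ?mulr0 //; have := prec_sum Hp; lia.
Qed.

Definition N0 := (r + s).-1.

Lemma sumA_widen M (x : T) : (N0 <= M)%N -> \sum_(l < M) A l x = \sum_(l < N0) A l x.
Proof.
move=> HM.
rewrite -!(big_mkord xpredT (fun l => A l x)) (big_cat_nat (leq0n N0) HM) /=.
rewrite [X in _ + X]big_nat_cond [X in _ + X]big1 ?addr0 // => l /andP[/andP[Hl _] _].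
apply: A_zero; move: Hl; rewrite /N0 -subn1; lia.
Qed.

Definition E (x : T) := \sum_(l < N0) A l x.

Lemma E_rec (x : T) : E x = ('X - 1) + \sum_(y | prec x y) stp x y * E y.
Proof.
rewrite /E -(sumA_widen x (leqnSn N0)) big_ord_recl A0; congr (_ + _).
have -> : \sum_(i < N0) A (lift ord0 i) x = \sum_(i < N0) A i.+1 x.
  by apply: eq_bigr => i _; rewrite lift0.
under eq_bigr do rewrite AS.
rewrite exchange_big /=; apply: eq_bigr => y _; by rewrite mulr_sumr.
Qed.

Definition cc (t : nat) : {poly int} := ('X - 1) * 'X^t.

Definition D (y : T) : {poly int} :=
  if (r - y.1 == s - y.2)%N then cc (r - y.1.+1) else 0.

Lemma geo k : \sum_(t < k) cc t = 'X^k - 1.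
Proof.
elim: k => [|k IH]; first by rewrite big_ord0 expr0 subrr.
by rewrite big_ord_recr /= IH /cc exprS; ring.
Qed.

Lemma pick_sum (k : nat) (h : nat -> {poly int}) : (0 < k)%N ->
  \sum_(j < s) (if (k == s - j)%N then h (j : nat) else 0) =
  if (k <= s)%N then h (s - k)%N else 0.
Proof.
move=> Hk; case: leqP => Hks.
  have Hj0 : (s - k < s)%N by lia.
  rewrite (bigD1 (Ordinal Hj0)) //= (_ : (k == s - (s - k))%N = true); last by apply/eqP; lia.
  rewrite big1 ?addr0 // => j /negbTE Hj; rewrite -val_eqE /= in Hj.
  by case: eqP => // E; move/eqP: Hj; have := ltn_ord j; lia.
by rewrite big1 // => j _; case: eqP => // E; have := ltn_ord j; lia.
Qed.

Lemma rev_sum (F : nat -> {poly int}) :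
  \sum_(i < r) F (i : nat) = \sum_(t < r) F (r - t.+1)%N.
Proof. by rewrite -(big_mkord xpredT) big_rev_mkord subn0. Qed.

Lemma sum_D (x : T) : ('X - 1) + \sum_(y | prec x y) stp x y * D y = D x.
Proof.
set a : nat := x.1; set b : nat := x.2.
have Ha : (a < r)%N := ltn_ord x.1. have Hb : (b < s)%N := ltn_ord x.2.
set m := (r - a)%N; set n := (s - b)%N; set p := minn m n.
pose G (i j : nat) : {poly int} :=
  if (r - i == s - j)%N then
    (if [&& (a <= i)%N, (b <= j)%N & ~~ ((a == i) && (b == j))] then
      (if (a < i)%N && (b < j)%N then 'X - 1 else -1) * cc (r - i.+1) else 0)
  else 0.
have -> : \sum_(y | prec x y) stp x y * D y = \sum_(i < r) \sum_(j < s) G i j.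
  rewrite pair_big big_mkcond; apply: eq_bigr => -[i j] _.
  rewrite /prec pair_eqN /stp /D /G /=.
  by repeat (case: ifP => _); rewrite ?mulr0.
have -> : \sum_(i < r) \sum_(j < s) G i j =
    \sum_(t < r) (if (t < p)%N then
       (if (t.+1 == p)%N then (if (m == n)%N then 0 else -1) else 'X - 1) * cc t else 0).
  rewrite (rev_sum (fun i => \sum_(j < s) G i j)); apply: eq_bigr => t _.
  have Ht := ltn_ord t.
  rewrite /G (eq_bigr (fun j : 'I_s => if (t.+1 == s - j)%N then
      (if [&& (a <= r - t.+1)%N, (b <= j)%N & ~~ ((a == r - t.+1)%N && (b == j))] then
      (if (a < r - t.+1)%N && (b < j)%N then 'X - 1 else -1) * cc t else 0) else 0)); last first.
    move=> j _; rewrite (_ : (r - (r - t.+1) = t.+1)%N); last by lia.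
    by rewrite (_ : (r - (r - t.+1).+1 = t)%N); last by lia.
  rewrite (pick_sum (fun j => (if [&& (a <= r - t.+1)%N, (b <= j)%N & ~~ ((a == r - t.+1)%N && (b == j))] then
      (if (a < r - t.+1)%N && (b < j)%N then 'X - 1 else -1) * cc t else 0))) //=.
  rewrite /p /m /n.
  repeat (case: ifP => ?); try (exfalso; lia); by rewrite ?mul0r.
have Hp : (p <= r)%N by rewrite /p /m; lia.
rewrite -big_mkcond /= -(big_ord_widen _ (fun t => (if (t.+1 == p)%N then (if (m == n)%N then 0 else -1) else 'X - 1) * cc t) Hp).
have [p' Ep] : exists p', p = p'.+1 by exists p.-1; rewrite /p /m /n; lia.
rewrite Ep big_ord_recr /= eqxx.
rewrite (eq_bigr (fun t : 'I_p' => ('X - 1) * cc t)); last first.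
  by move=> t _; rewrite (_ : (t.+1 == p'.+1)%N = false) //; have := ltn_ord t; lia.
rewrite -mulr_sumr geo /D.
rewrite (_ : (r - x.1 == s - x.2)%N = (m == n)%N) //.
case: ifP => Emn.
  rewrite (_ : (r - x.1.+1)%N = p'); last by move: Ep; rewrite /p /m /n; move/eqP: Emn; lia.
  rewrite /cc; ring.
rewrite /cc; ring.
Qed.

Lemma E_closed (x : T) : E x = D x.
Proof.
have [k Hk] : exists k, (r - x.1 + (s - x.2) < k)%N by exists (r - x.1 + (s - x.2)).+1.
elim: k x Hk => [|k IH] x Hk //.
rewrite E_rec -sum_D; congr (_ + _); apply: eq_bigr => y Hp.
rewrite IH //. move: (prec_sum Hp) Hk. case: x {Hp} => x1 x2; case: y => y1 y2 /=. have := ltn_ord y1; have := ltn_ord x1; have := ltn_ord x2; have := ltn_ord y2. lia.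
Qed.

Lemma sumD : \sum_(x : T) D x = 'X^(minn r s) - 1.
Proof.
rewrite -(pair_big xpredT xpredT (fun i j => D (i, j))) /=.
rewrite (eq_bigr (fun i : 'I_r => if (r - i <= s)%N then cc (r - i.+1) else 0)); last first.
  move=> i _; rewrite /D /=.
  rewrite (eq_bigr (fun j : 'I_s => if (r - i == s - j)%N then (fun _ : nat => cc (r - i.+1)) (j : nat) else 0)) //.
  by rewrite (pick_sum (fun _ : nat => cc (r - i.+1))) //; have := ltn_ord i; lia.
rewrite (rev_sum (fun i => if (r - i <= s)%N then cc (r - i.+1) else 0)).
rewrite (eq_bigr (fun t : 'I_r => if (t < minn r s)%N then cc t else 0)); last first.
  move=> t _; have Ht := ltn_ord t.
  rewrite (_ : (r - (r - t.+1) = t.+1)%N); last by lia.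
  rewrite (_ : (r - (r - t.+1).+1 = t)%N); last by lia.
  by rewrite (_ : (t.+1 <= s)%N = (t < minn r s)%N) //; lia.
rewrite -big_mkcond /= -(big_ord_widen _ cc (geq_minl r s)).
exact: geo.
Qed.

Lemma total : (0 < r)%N -> (0 < s)%N -> sum_cells w = 'X^(minn r s).
Proof.
move=> Hr Hs.
rewrite /sum_cells -(big_mkord xpredT (fun l => \sum_(t : l.-tuple T | is_cell t) w t)).
rewrite big_nat_recl //.
rewrite (big_pred1 [tuple]); last by move=> t; rewrite (tuple0 t) /= eqxx.
rewrite (_ : w [tuple] = 1); last by rewrite /w /= expr0 mulr1.
rewrite (eq_bigr (fun l => \sum_(x : T) A l x)); last first.
  by move=> l _; rewrite (big_tuple_cons l (fun t => is_cell t) w).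
rewrite exchange_big /= (eq_bigr (fun x => E x)); last first.
  move=> x _; rewrite big_mkord sumA_widen //; rewrite /N0 -subn1; nia.
rewrite (eq_bigr (fun x => D x)); last by move=> x _; rewrite E_closed.
rewrite sumD; ring.
Qed.

End Cells.

Unset Implicit Arguments.

Theorem mainTheorem14 (r s : nat) (hr : (1 <= r)%N) (hs : (1 <= s)%N) :
  sum_cells (fun C : seq ('I_r * 'I_s) =>
      ('X - 1 : {poly int}) ^+ (cell_S C - cell_l C)%N * (-1) ^+ cell_S C)
  = 'X ^+ minn r s.
Proof. exact: (@total r s hr hs). Qed.
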